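(* Let $N\ge 2$, $k=2$, $T=2$, and suppose $p_{11}\ge p_{01}$. Then for every initial belief vector $\omega(1)=(\omega_1,\dots,\omega_N)\in[0,1]^N$, the myopic sensing policy (with any tie-breaking) is optimal. That is, its expected total reward over the two slots equals the maximum expected total reward over the two slots achievable by any sensing policy.
   Context: Opportunistic spectrum access model. There are $N$ channels. The state $S_i(t)\in\{0,1\}$ of channel $i$ in slot $t$ (0 = busy, 1 = idle) evolves as a two-state discrete-time Markov chain with transition probabilities $p_{ij}=\Pr(S_i(t+1)=j\mid S_i(t)=i)$. The chains are independent across channels and all have the same transition probabilities $p_{01},p_{11}\in[0,1]$. The initial states are independent with $\Pr(S_i(1)=1)=\omega_i(1)$. In each slot $t=1,\dots,T$, a secondary user chooses a set $\mathcal{A}(t)$ of exactly $k$ channels to sense, based on past actions and observations. It observes the states of the sensed channels and obtains reward $1$ if at least one sensed channel is idle, and reward $0$ otherwise. The belief $\omega_i(t)$ is the conditional probability that $S_i(t)=1$ given past actions and observations. The expected immediate reward of action $\mathcal{A}(t)$ is $1-\prod_{i\in\mathcal{A}(t)}(1-\omega_i(t))$. Beliefs update as follows: $\omega_i(t+1)=p_{11}$ if $i\in\mathcal{A}(t)$ and $S_i(t)=1$; $\omega_i(t+1)=p_{01}$ if $i\in\mathcal{A}(t)$ and $S_i(t)=0$; and $\omega_i(t+1)=\tau(\omega_i(t))$ if $i\notin\mathcal{A}(t)$, where $\tau(\omega)=\omega p_{11}+(1-\omega)p_{01}$. A policy maps histories to actions. The objective is to maximize the expected total (equivalently, average) reward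 over slots $1,\dots,T$. The myopic sensing policy senses, in every slot, $k$ channels with the largest current beliefs $\omega_i(t)$, i.e. it maximizes the immediate expected reward. *)

(* Defs.v *)
From HB Require Import structures.
From mathcomp Require Import all_boot all_order all_algebra.
Set Implicit Arguments. Unset Strict Implicit. Unset Printing Implicit Defensive.
Import Order.TTheory GRing.Theory Num.Theory.
Local Open Scope ring_scope.

(* Channel states: a joint state of the N channels is S : {ffun 'I_N -> bool},
   with S i = true meaning "idle" (state 1) and false meaning "busy" (state 0). *)
Notation chstate N := {ffun 'I_N -> bool}.

Definition init_prob (R : realFieldType) (N : nat) (w : 'I_N -> R) (S : chstate N) : R :=
  \prod_(i < N) (if S i then w i else 1 - w i).

Definition trans1 (R : realFieldType) (p01 p11 : R) (a b : bool) : R :=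
  if a then (if b then p11 else 1 - p11) else (if b then p01 else 1 - p01).

Definition trans_prob (R : realFieldType) (N : nat) (p01 p11 : R) (S S' : chstate N) : R :=
  \prod_(i < N) trans1 p01 p11 (S i) (S' i).

Definition reward (R : realFieldType) (N : nat) (A : {set 'I_N}) (S : chstate N) : R :=
  if [exists i in A, S i] then 1 else 0.
Arguments reward {R N} A S.

Definition tau (R : realFieldType) (p01 p11 w : R) : R := w * p11 + (1 - w) * p01.

Definition belief_update (R : realFieldType) (N : nat) (p01 p11 : R) (w : 'I_N -> R)
    (A1 : {set 'I_N}) (S1 : chstate N) : 'I_N -> R :=
  fun i => if i \in A1 then (if S1 i then p11 else p01) else tau p01 p11 (w i).

(* A two-slot sensing policy: a slot-1 action A1 (the history is empty) and a
   slot-2 rule pi2 mapping the slot-1 state to an action, where pi2 may only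
   depend on the observed part of the state (the states of channels in A1). *)
Definition admissible_policy (N k : nat) (A1 : {set 'I_N})
    (pi2 : chstate N -> {set 'I_N}) : Prop :=
  #|A1| = k /\ (forall S : chstate N, #|pi2 S| = k) /\
  (forall S S' : chstate N, (forall i, i \in A1 -> S i = S' i) -> pi2 S = pi2 S').

Definition total_reward (R : realFieldType) (N : nat) (p01 p11 : R) (w : 'I_N -> R)
    (A1 : {set 'I_N}) (pi2 : chstate N -> {set 'I_N}) : R :=
  \sum_(S1 : chstate N) \sum_(S2 : chstate N)
     init_prob w S1 * trans_prob p01 p11 S1 S2 * (reward A1 S1 + reward (pi2 S1) S2).

Definition myopic_action (R : realFieldType) (N k : nat) (w : 'I_N -> R) (A : {set 'I_N}) : Prop :=
  #|A| = k /\ (forall i j, i \in A -> j \notin A -> w j <= w i).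

Definition myopic_policy (R : realFieldType) (N k : nat) (p01 p11 : R) (w : 'I_N -> R)
    (A1 : {set 'I_N}) (pi2 : chstate N -> {set 'I_N}) : Prop :=
  myopic_action k w A1 /\
  (forall S : chstate N, myopic_action k (belief_update p01 p11 w A1 S) (pi2 S)).

(* Submission.v *)
Require Import Defs.
From HB Require Import structures.
From mathcomp Require Import all_boot all_order all_algebra.
From Stdlib Require Import Ring.
Set Implicit Arguments. Unset Strict Implicit. Unset Printing Implicit Defensive.
Import Order.TTheory GRing.Theory Num.Theory.
Local Open Scope ring_scope.

Section Proof1.
Variable R : realFieldType.
Variable N : nat.

Lemma sum_prod (F : 'I_N -> bool -> R) :
  \sum_(S : {ffun 'I_N -> bool}) \prod_i F i (S i) = \prod_i (F i true + F i false).
Proof.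
rewrite -bigA_distr_bigA; apply: eq_bigr => i _; by rewrite big_bool.
Qed.

Lemma rewardE (A : {set 'I_N}) (S : {ffun 'I_N -> bool}) :
  reward A S = 1 - \prod_(i in A) (if S i then 0 else 1 : R).
Proof.
rewrite /reward; case: existsP => [[i /andP[iA Si]]|H].
  by rewrite (bigD1 i) //= Si mul0r subr0.
rewrite big1 ?subrr // => i iA; case: ifP => // Si; case: H; exists i; by rewrite iA Si.
Qed.

Lemma prod_set2 (F : 'I_N -> R) (a b : 'I_N) : a != b ->
  \prod_(i in [set a; b]) F i = F a * F b.
Proof. move=> ab; by rewrite big_setU1 ?big_set1 // inE. Qed.

Lemma prod_if2 (X Y : 'I_N -> R) (a b : 'I_N) : a != b ->
  \prod_i (if i == a then X i else if i == b then Y i else 1) = X a * Y b.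
Proof.
move=> ab; rewrite (bigD1 a) //= eqxx (bigD1 b) //=; last by rewrite eq_sym.
rewrite eqxx eq_sym (negbTE ab).
rewrite big1 ?mulr1 // => i /andP[ia ib].
by rewrite (negbTE ia) (negbTE ib).
Qed.
End Proof1.

Section Proof2.
Variable R : realFieldType.
Variable N : nat.
Variables p01 p11 : R.
Variable w : 'I_N -> R.

Definition ee := 1 - p11.
Definition ff := 1 - p01.
Definition gg (b : bool) := if b then ee else ff.
Definition ell (x : R) := x * ee + (1 - x) * ff.
Definition Pb (x : R) (b : bool) := if b then x else 1 - x.
Definition vl (b1 b2 : 'I_N) (s t : bool) (l : 'I_N) :=
  if l == b1 then gg s else if l == b2 then gg t else ell (w l).
Definition rep (b1 b2 : 'I_N) (s t : bool) : {ffun 'I_N -> bool} :=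
  [ffun l => if l == b1 then s else if l == b2 then t else false].
Definition slot2 (sig : {ffun 'I_N -> bool} -> {set 'I_N}) (b1 b2 : 'I_N) :=
  \sum_(s : bool) \sum_(t : bool)
     Pb (w b1) s * Pb (w b2) t * \prod_(l in sig (rep b1 b2 s t)) vl b1 b2 s t l.

Lemma one_sub_add (x : R) : x + (1 - x) = 1.
Proof. by rewrite addrC subrK. Qed.

Lemma sumT (S1 : {ffun 'I_N -> bool}) :
  \sum_(S2 : {ffun 'I_N -> bool}) trans_prob p01 p11 S1 S2 = 1.
Proof.
rewrite /trans_prob (sum_prod (fun i b => trans1 p01 p11 (S1 i) b)) big1 // => i _; rewrite /trans1.
by case: (S1 i); rewrite one_sub_add.
Qed.

Lemma sumTr (S1 : {ffun 'I_N -> bool}) (C : {set 'I_N}) :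
  \sum_(S2 : {ffun 'I_N -> bool}) trans_prob p01 p11 S1 S2 * reward C S2
  = 1 - \prod_(i in C) gg (S1 i).
Proof.
under [LHS]eq_bigr => S2 _ do rewrite rewardE mulrBr mulr1.
rewrite sumrB sumT; congr (_ - _).
under [LHS]eq_bigr => S2 _ do rewrite big_mkcond /trans_prob -big_split /=.
rewrite (sum_prod (fun i b => trans1 p01 p11 (S1 i) b * (if i \in C then (if b then 0 else 1) else 1))).
rewrite [RHS]big_mkcond; apply: eq_bigr => i _ /=.
rewrite /trans1 /gg /ee /ff; case: (i \in C); case: (S1 i);
  by rewrite ?mulr0 ?mulr1 ?add0r ?one_sub_add.
Qed.

Lemma sum_init : \sum_(S : {ffun 'I_N -> bool}) init_prob w S = 1.
Proof. by rewrite /init_prob (sum_prod (fun i b => if b then w i else 1 - w i)) big1 // => i _; rewrite one_sub_add. Qed.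

Lemma sum_init_reward (B : {set 'I_N}) :
  \sum_(S : {ffun 'I_N -> bool}) init_prob w S * reward B S = 1 - \prod_(i in B) (1 - w i).
Proof.
under [LHS]eq_bigr => S _ do rewrite rewardE mulrBr mulr1.
rewrite sumrB sum_init; congr (_ - _).
under [LHS]eq_bigr => S _ do rewrite big_mkcond /init_prob -big_split /=.
rewrite (sum_prod (fun i b => (if b then w i else 1 - w i) * (if i \in B then (if b then 0 else 1) else 1))).
rewrite [RHS]big_mkcond; apply: eq_bigr => i _ /=.
by case: (i \in B); rewrite ?mulr0 ?mulr1 ?add0r ?one_sub_add.
Qed.
End Proof2.

Section Proof3.
Variable R : realFieldType.
Variable N : nat.
Variables p01 p11 : R.
Variable w : 'I_N -> R.

Lemma sum_split2 (b1 b2 : 'I_N) (H : {ffun 'I_N -> bool} -> R) :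
  \sum_(S : {ffun 'I_N -> bool}) H S = \sum_(s : bool) \sum_(t : bool)
     \sum_(S : {ffun 'I_N -> bool}) (if (S b1 == s) && (S b2 == t) then H S else 0).
Proof.
under [RHS]eq_bigr => s _ do rewrite exchange_big.
rewrite exchange_big; apply: eq_bigr => S _ /=.
rewrite !big_bool /=.
by case: (S b1); case: (S b2); rewrite /= ?addr0 ?add0r.
Qed.

Lemma block (b1 b2 : 'I_N) (s t : bool) (C : {set 'I_N}) : b1 != b2 ->
  \sum_(S : {ffun 'I_N -> bool})
     (if (S b1 == s) && (S b2 == t) then init_prob w S * \prod_(l in C) gg p01 p11 (S l) else 0)
  = Pb (w b1) s * Pb (w b2) t * \prod_(l in C) vl p01 p11 w b1 b2 s t l.
Proof.
move=> b12.
pose F i b := Pb (w i) b * ((if i == b1 then ((b == s)%:R : R) else if i == b2 then (b == t)%:R else 1)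
   * (if i \in C then gg p01 p11 b else 1)).
rewrite (eq_bigr (fun S : {ffun 'I_N -> bool} => \prod_i F i (S i))); last first.
  move=> S _; rewrite /F big_split /= big_split /= (prod_if2 (fun i => ((S i == s)%:R : R)) (fun i => ((S i == t)%:R : R))) //.
  rewrite -big_mkcond /=.
  by rewrite /init_prob /Pb; case: (S b1 == s); case: (S b2 == t); rewrite /= ?mulr1n ?mulr0n ?mulr0 ?mul0r ?mulr1 ?mul1r ?mulr0.
rewrite sum_prod (eq_bigr (fun i => (if i == b1 then Pb (w b1) s else if i == b2 then Pb (w b2) t else 1) *
   (if i \in C then vl p01 p11 w b1 b2 s t i else 1))); last first.
  move=> i _; rewrite /F /vl /Pb; clear F.
  case: (eqVneq i b1) => [->|ib1].
    by case: (b1 \in C); case: s; rewrite /= ?(mulr0, mul0r, mulr1, mul1r, addr0, add0r).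
  case: (eqVneq i b2) => [->|ib2].
    by case: (b2 \in C); case: t; rewrite /= ?(mulr0, mul0r, mulr1, mul1r, addr0, add0r).
  case: (i \in C); rewrite ?mulr1 ?mul1r ?one_sub_add //.
rewrite big_split /= (prod_if2 (fun _ => Pb (w b1) s) (fun _ => Pb (w b2) t)) //.
by rewrite -big_mkcond.
Qed.
End Proof3.

Section Proof4.
Variable R : realFieldType.
Variable N : nat.
Variables p01 p11 : R.
Variable w : 'I_N -> R.

Definition agrees (b1 b2 : 'I_N) (sig : {ffun 'I_N -> bool} -> {set 'I_N}) :=
  forall S S' : {ffun 'I_N -> bool}, (forall i, i \in [set b1; b2] -> S i = S' i) -> sig S = sig S'.

Lemma slot2E sig b1 b2 : b1 != b2 -> agrees b1 b2 sig ->
  \sum_(S : {ffun 'I_N -> bool}) init_prob w S * \prod_(l in sig S) gg p01 p11 (S l)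
  = slot2 p01 p11 w sig b1 b2.
Proof.
move=> b12 hs; rewrite (sum_split2 b1 b2); apply: eq_bigr => s _; apply: eq_bigr => t _.
rewrite -block //; apply: eq_bigr => S _.
case: ifP => // /andP[/eqP h1 /eqP h2].
rewrite (hs S (rep b1 b2 s t)) // => i; rewrite !inE => /orP[/eqP->|/eqP->];
  rewrite ffunE ?eqxx //.
by rewrite eq_sym (negbTE b12).
Qed.

Lemma total_eq sig b1 b2 : b1 != b2 -> agrees b1 b2 sig ->
  total_reward p01 p11 w [set b1; b2] sig
  = (1 - (1 - w b1) * (1 - w b2)) + (1 - slot2 p01 p11 w sig b1 b2).
Proof.
move=> b12 hs; rewrite /total_reward.
rewrite (eq_bigr (fun S1 => init_prob w S1 * reward [set b1; b2] S1 +
    init_prob w S1 * (1 - \prod_(l in sig S1) gg p01 p11 (S1 l)))); last first.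
  move=> S1 _.
  under [LHS]eq_bigr => S2 _ do rewrite mulrDr -mulrA -mulrA.
  rewrite big_split /= -!big_distrr /= -sumTr.
  by rewrite -big_distrl /= sumT mul1r.
rewrite big_split /= sum_init_reward prod_set2 //; congr (_ + _).
under [LHS]eq_bigr => S _ do rewrite mulrBr mulr1.
by rewrite sumrB sum_init (slot2E b12 hs).
Qed.
End Proof4.

Section Opt.
Variable R : realFieldType.
Local Notation RT := (Algebra.BaseAddMagma.sort (Num_RealField__to__Algebra_BaseAddMagma R)).
Local Notation Radd := (@Algebra.add (Num_RealField__to__Algebra_BaseAddMagma R)).
Local Notation Rmul := (@GRing.mul (Num_RealField__to__GRing_PzSemiRing R)).
Local Notation Ropp := (@Algebra.opp (Num_RealField__to__Algebra_BaseZmodule R)).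
Local Notation R0 := (@Algebra.zero (Num_RealField__to__Algebra_BaseAddUMagma R)).
Local Notation R1 := (GRing.one (Num_RealField__to__GRing_PzSemiRing R)).
Lemma Rth2 : @ring_theory RT R0 R1 Radd Rmul (fun x y => Radd x (Ropp y)) Ropp (@eq RT).
Proof.
constructor => //=; [exact: add0r|exact: addrC|exact: addrA|exact: mul1r|exact: mulrC|exact: mulrA|exact: mulrDl|exact: subrr].
Qed.
Add Ring Rring2 : Rth2.

Ltac rnorm t :=
  lazymatch t with
  | @Algebra.add _ ?a ?b => let a' := rnorm a in let b' := rnorm b in constr:(Radd a' b')
  | @GRing.mul _ ?a ?b => let a' := rnorm a in let b' := rnorm b in constr:(Rmul a' b')
  | @Algebra.opp _ ?a => let a' := rnorm a in constr:(Ropp a')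
  | @Algebra.zero _ => constr:(R0)
  | @GRing.one _ => constr:(R1)
  | _ => t
  end.
Lemma wrapeq (a b : R) : 0 + a = 0 + b -> a = b. Proof. by rewrite !add0r. Qed.
Ltac rring := lazymatch goal with |- ?l = ?r =>
  let l' := rnorm l in let r' := rnorm r in apply: wrapeq; change (Radd R0 l' = Radd R0 r'); ring end.

Variable N : nat.
Variables p01 p11 : R.
Variable w : 'I_N -> R.
Hypothesis hp0 : 0 <= p01.
Hypothesis hp01 : p01 <= p11.
Hypothesis hp1 : p11 <= 1.
Hypothesis hw : forall i, 0 <= w i <= 1.

Local Notation e := (ee p11).
Local Notation f := (ff p01).
Local Notation ell := (ell p01 p11).

Lemma e_ge0 : 0 <= e. Proof. by rewrite /ee subr_ge0. Qed.
Lemma e_le_f : e <= f. Proof. by rewrite /ee /ff lerB. Qed.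
Lemma f_le1 : f <= 1. Proof. by rewrite /ff gerBl. Qed.
Lemma f_ge0 : 0 <= f. Proof. exact: le_trans e_ge0 e_le_f. Qed.
Lemma e_le1 : e <= 1. Proof. exact: le_trans e_le_f f_le1. Qed.
Lemma w_ge0 i : 0 <= w i. Proof. by case/andP: (hw i). Qed.
Lemma w_le1 i : w i <= 1. Proof. by case/andP: (hw i). Qed.
Lemma w_c0 i : 0 <= 1 - w i. Proof. by rewrite subr_ge0 w_le1. Qed.

Lemma ell_ge x : 0 <= x <= 1 -> e <= ell x.
Proof.
case/andP=> x0 x1; rewrite -subr_ge0.
have -> : ell x - e = (1 - x) * (f - e) by rewrite /Submission.ell; rring.
by apply: mulr_ge0; rewrite subr_ge0 // e_le_f.
Qed.
Lemma ell_le x : 0 <= x <= 1 -> ell x <= f.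
Proof.
case/andP=> x0 x1; rewrite -subr_ge0.
have -> : f - ell x = x * (f - e) by rewrite /Submission.ell; rring.
by apply: mulr_ge0; rewrite // subr_ge0 e_le_f.
Qed.

Lemma val_ge b1 b2 s t l : e <= vl p01 p11 w b1 b2 s t l.
Proof.
rewrite /vl /gg; case: (l == b1); last case: (l == b2); try (case: s); try (case: t);
  rewrite ?e_le_f ?ell_ge //.
Qed.
Lemma val_le b1 b2 s t l : vl p01 p11 w b1 b2 s t l <= f.
Proof.
rewrite /vl /gg; case: (l == b1); last case: (l == b2); try (case: s); try (case: t);
  rewrite ?e_le_f ?ell_le //.
Qed.
Lemma val_ge0 b1 b2 s t l : 0 <= vl p01 p11 w b1 b2 s t l.
Proof. exact: le_trans e_ge0 (val_ge _ _ _ _ _). Qed.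


Lemma pair_le (u : 'I_N -> R) c1 c2 d1 d2 : c1 != c2 -> d1 != d2 -> (forall l, 0 <= u l) ->
  (forall i j, i \in [set c1; c2] -> j \notin [set c1; c2] -> u i <= u j) ->
  u c1 * u c2 <= u d1 * u d2.
Proof.
move=> c12 d12 u0 H.
have Hc1 : c1 \in [set c1; c2] by rewrite !inE eqxx.
have Hc2 : c2 \in [set c1; c2] by rewrite !inE eqxx orbT.
case: (boolP (d1 \in [set c1; c2])) => d1C; case: (boolP (d2 \in [set c1; c2])) => d2C.
- move: d1C d2C d12; rewrite !inE => /orP[/eqP->|/eqP->] /orP[/eqP->|/eqP->];
    rewrite ?eqxx // => _; by rewrite mulrC.
- move: d1C; rewrite !inE => /orP[/eqP->|/eqP->].
    by apply: ler_wpM2l; [exact: u0 c1|exact: (H c2 d2 Hc2 d2C)].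
  rewrite mulrC; by apply: ler_wpM2l; [exact: u0 c2|exact: (H c1 d2 Hc1 d2C)].
- move: d2C; rewrite !inE => /orP[/eqP->|/eqP->].
    rewrite [u d1 * _]mulrC; by apply: ler_wpM2l; [exact: u0 c1|exact: (H c2 d1 Hc2 d1C)].
  by apply: ler_wpM2r; [exact: u0 c2|exact: (H c1 d1 Hc1 d1C)].
- exact: ler_pM (u0 c1) (u0 c2) (H c1 d1 Hc1 d1C) (H c2 d2 Hc2 d2C).
Qed.

Lemma card2E (C : {set 'I_N}) : #|C| = 2%N -> exists c d, c != d /\ C = [set c; d].
Proof. by move=> h; apply/cards2P; rewrite h. Qed.

Lemma myopic_le (b : 'I_N -> R) (C D : {set 'I_N}) :
  myopic_action 2 b C -> (forall l, b l <= 1) -> #|D| = 2%N ->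
  \prod_(i in C) (1 - b i) <= \prod_(i in D) (1 - b i).
Proof.
case=> cC hC b1 cD.
have [c1 [c2 [c12 eC]]] := card2E cC; subst C.
have [d1 [d2 [d12 ->]]] := card2E cD.
rewrite !prod_set2 //; apply: (pair_le (u := fun i => 1 - b i)) => //.
  by move=> l; rewrite subr_ge0.
by move=> i j iC jC; apply: lerB; [exact: lexx | exact: hC].
Qed.

Definition vv b1 b2 := vl p01 p11 w b1 b2 false false.
Definition Rm b1 b2 := vv b1 b2 [arg min_(l < b1) vv b1 b2 l]%O.
Definition Qm b1 b2 :=
  vv b1 b2 ([arg min_(p < (b1, b2) | p.1 != p.2) (vv b1 b2 p.1 * vv b1 b2 p.2)]%O).1 *
  vv b1 b2 ([arg min_(p < (b1, b2) | p.1 != p.2) (vv b1 b2 p.1 * vv b1 b2 p.2)]%O).2.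

Lemma Rm_le b1 b2 l : Rm b1 b2 <= vv b1 b2 l.
Proof. rewrite /Rm; by case: (@arg_minP _ _ _ b1 xpredT (vv b1 b2)) => // i _ /(_ l isT). Qed.
Lemma Rm_ex b1 b2 : exists l, Rm b1 b2 = vv b1 b2 l.
Proof. by eexists. Qed.
Lemma Rm_ge b1 b2 : e <= Rm b1 b2.
Proof. by have [l ->] := Rm_ex b1 b2; exact: val_ge. Qed.
Lemma Rm_ge0 b1 b2 : 0 <= Rm b1 b2.
Proof. exact: le_trans e_ge0 (Rm_ge _ _). Qed.

Lemma Qm_le b1 b2 c d : b1 != b2 -> c != d -> Qm b1 b2 <= vv b1 b2 c * vv b1 b2 d.
Proof.
move=> b12 cd; rewrite /Qm.
case: (@arg_minP _ _ _ (b1, b2) (fun p : 'I_N * 'I_N => p.1 != p.2)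
   (fun p => vv b1 b2 p.1 * vv b1 b2 p.2)) => // p _ /(_ (c, d) cd) //.
Qed.
Lemma Qm_ex b1 b2 : b1 != b2 -> exists c d, c != d /\ Qm b1 b2 = vv b1 b2 c * vv b1 b2 d.
Proof.
move=> b12; rewrite /Qm.
case: (@arg_minP _ _ _ (b1, b2) (fun p : 'I_N * 'I_N => p.1 != p.2)
   (fun p => vv b1 b2 p.1 * vv b1 b2 p.2)) => // p hp _.
by exists p.1, p.2.
Qed.

Definition Xv b1 b2 (s t : bool) :=
  if s then (if t then e * e else e * Rm b1 b2) else (if t then e * Rm b1 b2 else Qm b1 b2).
Definition Lopt2 b1 b2 :=
  \sum_(s : bool) \sum_(t : bool) Pb (w b1) s * Pb (w b2) t * Xv b1 b2 s t.

Lemma Pb_ge0 i s : 0 <= Pb (w i) s.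
Proof. by case: s; rewrite /Pb ?w_ge0 ?w_c0. Qed.

Lemma prod_lower b1 b2 s t (C : {set 'I_N}) : b1 != b2 -> #|C| = 2%N ->
  Xv b1 b2 s t <= \prod_(l in C) vl p01 p11 w b1 b2 s t l.
Proof.
move=> b12 cC; have [c [d [cd ->]]] := card2E cC; rewrite prod_set2 //.
have g0 := @val_ge0 b1 b2 s t.
have ge := @val_ge b1 b2 s t.
have vvE l : l != b1 -> l != b2 -> vl p01 p11 w b1 b2 s t l = vv b1 b2 l.
  by move=> h1 h2; rewrite /vv /vl (negbTE h1) (negbTE h2).
rewrite /Xv; case: s t g0 ge vvE => [] [] g0 ge vvE.
- exact: ler_pM e_ge0 e_ge0 (ge c) (ge d).
-
  have hR l : l != b1 -> Rm b1 b2 <= vl p01 p11 w b1 b2 true false l.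
    move=> h; apply: le_trans (Rm_le b1 b2 l) _.
    by rewrite /vv /vl (negbTE h); case: (l == b2).
  case: (eqVneq c b1) => [cb|cb].
    have dc : d != b1 by rewrite -cb eq_sym.
    exact: ler_pM e_ge0 (Rm_ge0 b1 b2) (ge c) (hR d dc).
  rewrite mulrC; exact: ler_pM (Rm_ge0 b1 b2) e_ge0 (hR c cb) (ge d).
- have hR l : l != b2 -> Rm b1 b2 <= vl p01 p11 w b1 b2 false true l.
    move=> h; apply: le_trans (Rm_le b1 b2 l) _.
    by rewrite /vv /vl (negbTE h); case: (l == b1).
  case: (eqVneq c b2) => [cb|cb].
    have dc : d != b2 by rewrite -cb eq_sym.
    exact: ler_pM e_ge0 (Rm_ge0 b1 b2) (ge c) (hR d dc).
  rewrite mulrC; exact: ler_pM (Rm_ge0 b1 b2) e_ge0 (hR c cb) (ge d).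
- exact: Qm_le.
Qed.

Lemma slot2_lower (sig : {ffun 'I_N -> bool} -> {set 'I_N}) b1 b2 : b1 != b2 -> (forall S, #|sig S| = 2%N) ->
  Lopt2 b1 b2 <= slot2 p01 p11 w sig b1 b2.
Proof.
move=> b12 hs; apply: ler_sum => s _; apply: ler_sum => t _.
apply: ler_wpM2l; first by apply: mulr_ge0; apply: Pb_ge0.
exact: prod_lower.
Qed.

Lemma bu_val a1 a2 s t l : a1 != a2 ->
  1 - belief_update p01 p11 w [set a1; a2] (rep a1 a2 s t) l = vl p01 p11 w a1 a2 s t l.
Proof.
move=> a12; rewrite /belief_update /vl /rep !inE ffunE.
have [->|h1] := eqVneq l a1; first by rewrite /= ; case: s.
have [->|h2] := eqVneq l a2; first by rewrite /=; case: t.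
rewrite /= /tau /Submission.ell /ee /ff; rring.
Qed.

Lemma exists_D a1 a2 s t : a1 != a2 ->
  exists D : {set 'I_N}, #|D| = 2%N /\ \prod_(l in D) vl p01 p11 w a1 a2 s t l = Xv a1 a2 s t.
Proof.
move=> a12.
have cA c d : c != d -> #|[set c; d]| = 2%N by move=> cd; rewrite cards2 cd.
rewrite /Xv; case: s; case: t.
- exists [set a1; a2]; split; first exact: cA.
  by rewrite prod_set2 // /vl eqxx eq_sym (negbTE a12) eqxx.
- have [l hl] := Rm_ex a1 a2.
  case: (eqVneq l a1) => [la|la].
    exists [set a1; a2]; split; first exact: cA.
    rewrite prod_set2 // /vl eqxx eq_sym (negbTE a12) eqxx hl la /vv /vl eqxx //.
  exists [set a1; l]; split; first by apply: cA; rewrite eq_sym.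
  rewrite prod_set2 1?eq_sym // hl /vv /vl eqxx (negbTE la).
  by case: (l == a2).
- have [l hl] := Rm_ex a1 a2.
  case: (eqVneq l a2) => [la|la].
    exists [set a1; a2]; split; first exact: cA.
    rewrite prod_set2 // /vl eqxx eq_sym (negbTE a12) eqxx hl la /vv /vl eqxx.
    by rewrite eq_sym (negbTE a12) mulrC.
  exists [set a2; l]; split; first by apply: cA; rewrite eq_sym.
  rewrite prod_set2 1?eq_sym // hl /vv /vl eqxx eq_sym (negbTE a12) (negbTE la).
  by case: (l == a1).
- have [c [d [cd hq]]] := Qm_ex a12.
  exists [set c; d]; split; first exact: cA.
  by rewrite prod_set2 // hq.
Qed.

Lemma prod_upper (pi2 : {ffun 'I_N -> bool} -> {set 'I_N}) a1 a2 s t : a1 != a2 ->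
  myopic_action 2 (belief_update p01 p11 w [set a1; a2] (rep a1 a2 s t)) (pi2 (rep a1 a2 s t)) ->
  \prod_(l in pi2 (rep a1 a2 s t)) vl p01 p11 w a1 a2 s t l <= Xv a1 a2 s t.
Proof.
move=> a12 hm.
have [D [cD hD]] := exists_D s t a12.
rewrite -hD.
have E l : vl p01 p11 w a1 a2 s t l = 1 - belief_update p01 p11 w [set a1; a2] (rep a1 a2 s t) l.
  by rewrite bu_val.
rewrite (eq_bigr _ (fun l _ => E l)) [X in _ <= X](eq_bigr _ (fun l _ => E l)).
apply: myopic_le => // l; by rewrite -subr_ge0 bu_val // val_ge0.
Qed.

Lemma slot2_upper (pi2 : {ffun 'I_N -> bool} -> {set 'I_N}) a1 a2 : a1 != a2 ->
  (forall S, myopic_action 2 (belief_update p01 p11 w [set a1; a2] S) (pi2 S)) ->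
  slot2 p01 p11 w pi2 a1 a2 <= Lopt2 a1 a2.
Proof.
move=> a12 hm; apply: ler_sum => s _; apply: ler_sum => t _.
apply: ler_wpM2l; first by apply: mulr_ge0; apply: Pb_ge0.
exact: prod_upper.
Qed.

Definition FF (a x Rr Qq : R) :=
  (1 - a) * (1 - x) + ((a * x * (e * e) + a * (1 - x) * (e * Rr)) +
                      ((1 - a) * x * (e * Rr) + (1 - a) * (1 - x) * Qq)).
Definition GR (a x y Rl Ru : R) :=
  (1 - a) * (y - x) + a * e * ((x - y) * e + (1 - x) * Rl - (1 - y) * Ru) +
  (1 - a) * e * (x * Rl - y * Ru).
Definition GQ (a x y Ql Qu : R) := (1 - a) * ((1 - x) * Ql - (1 - y) * Qu).

Lemma Fcore a x y Rl Ru Ql Qu : 0 <= GR a x y Rl Ru -> 0 <= GQ a x y Ql Qu ->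
  FF a y Ru Qu <= FF a x Rl Ql.
Proof.
move=> h1 h2; rewrite -subr_ge0.
have -> : FF a x Rl Ql - FF a y Ru Qu = GR a x y Rl Ru + GQ a x y Ql Qu.
  rewrite /FF /GR /GQ; rring.
exact: addr_ge0.
Qed.

Lemma F_mono a x Rr Rr' Qq Qq' : 0 <= a <= 1 -> 0 <= x <= 1 -> Rr <= Rr' -> Qq <= Qq' ->
  FF a x Rr Qq <= FF a x Rr' Qq'.
Proof.
case/andP=> a0 a1 /andP[x0 x1] hR hQ.
have a0' : 0 <= 1 - a by rewrite subr_ge0.
have x0' : 0 <= 1 - x by rewrite subr_ge0.
rewrite /FF lerD2l; apply: lerD; apply: lerD; rewrite ?lexx //.
- apply: ler_wpM2l; first by rewrite mulr_ge0.
  by apply: ler_wpM2l; first exact: e_ge0.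
- apply: ler_wpM2l; first by rewrite mulr_ge0.
  by apply: ler_wpM2l; first exact: e_ge0.
- by apply: ler_wpM2l; first by rewrite mulr_ge0.
Qed.

Lemma GR_case1 a x y : 0 <= a <= 1 -> 0 <= x -> x <= y -> y <= 1 ->
  0 <= GR a x y (ell y) (ell x).
Proof.
case/andP=> a0 a1 x0 xy y1.
have -> : GR a x y (ell y) (ell x) = (1 - a) * (y - x) * (1 - e * f).
  rewrite /GR /Submission.ell; rring.
apply: mulr_ge0; first apply: mulr_ge0; rewrite subr_ge0 //.
apply: mulr_ile1; [exact: e_ge0|exact: f_ge0|exact: e_le1|exact: f_le1].
Qed.

Lemma GR_case2 a x y r1 : 0 <= a <= 1 -> x <= y -> e <= r1 -> r1 <= 1 ->
  0 <= GR a x y r1 r1.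
Proof.
case/andP=> a0 a1 xy er r1le.
have -> : GR a x y r1 r1 = a * e * ((y - x) * (r1 - e)) + (1 - a) * (y - x) * (1 - e * r1).
  rewrite /GR; rring.
have e0 := e_ge0.
apply: addr_ge0; apply: mulr_ge0; (try apply: mulr_ge0); rewrite ?subr_ge0 //.
apply: mulr_ile1; [exact: e_ge0|exact: le_trans e_ge0 er|exact: e_le1|exact: r1le].
Qed.

Lemma GQ_case1 a x y r1 : a <= 1 -> x <= y -> 0 <= r1 ->
  0 <= GQ a x y (ell y * r1) (ell x * r1).
Proof.
move=> a1 xy r0.
have -> : GQ a x y (ell y * r1) (ell x * r1) = (1 - a) * (e * (y - x) * r1).
  rewrite /GQ /Submission.ell; rring.
by apply: mulr_ge0; rewrite ?subr_ge0 //; apply: mulr_ge0 => //; apply: mulr_ge0; rewrite ?e_ge0 ?subr_ge0.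
Qed.

Lemma GQ_case2 a x y Q0 : a <= 1 -> x <= y -> 0 <= Q0 ->
  0 <= GQ a x y Q0 Q0.
Proof.
move=> a1 xy q0.
have -> : GQ a x y Q0 Q0 = (1 - a) * ((y - x) * Q0) by rewrite /GQ; rring.
by apply: mulr_ge0; rewrite ?subr_ge0 //; apply: mulr_ge0; rewrite ?subr_ge0.
Qed.

Definition LL b1 b2 := (1 - w b1) * (1 - w b2) + Lopt2 b1 b2.

Lemma LL_F b1 b2 : LL b1 b2 = FF (w b1) (w b2) (Rm b1 b2) (Qm b1 b2).
Proof. rewrite /LL /Lopt2 !big_bool /= /Pb /Xv /FF; rring. Qed.

Lemma exchange i j m : i != j -> i != m -> j != m -> w j <= w m -> LL i m <= LL i j.
Proof.
move=> ij im jm xy.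
pose vb l := if (l == i) || (l == j) || (l == m) then f else ell (w l).
have vb_ge l : e <= vb l.
  by rewrite /vb; case: ifP => _; [exact: e_le_f | exact: ell_ge].
have vb_ge0 l : 0 <= vb l by exact: le_trans e_ge0 (vb_ge l).
have vb_le l : vb l <= f.
  by rewrite /vb; case: ifP => _; [exact: lexx | exact: ell_le].
pose ls := [arg min_(l < i) vb l]%O.
have r1le l : vb ls <= vb l.
  by rewrite /ls; case: (@arg_minP _ _ _ i xpredT vb) => // k _ /(_ l isT).
pose ps := [arg min_(p < (i, j) | p.1 != p.2) (vb p.1 * vb p.2)]%O.
have [q12 Q0le] : ps.1 != ps.2 /\ forall c d, c != d -> vb ps.1 * vb ps.2 <= vb c * vb d.
  rewrite /ps; case: (@arg_minP _ _ _ (i, j) (fun p : 'I_N * 'I_N => p.1 != p.2)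
     (fun p => vb p.1 * vb p.2)) => // p hp H; split => // c d cd; exact: (H (c, d)).
have vij l : l != m -> vv i j l = vb l.
  move=> h; rewrite /vv /vl /vb /gg (negbTE h) orbF.
  by case: (l == i) => //=; case: (l == j).
have vijm : vv i j m = ell (w m).
  by rewrite /vv /vl eq_sym (negbTE im) eq_sym (negbTE jm).
have vim l : l != j -> vv i m l = vb l.
  move=> h; rewrite /vv /vl /vb /gg (negbTE h) orbF.
  by case: (l == i) => //=; case: (l == m).
have vimj : vv i m j = ell (w j).
  by rewrite /vv /vl eq_sym (negbTE ij) (negbTE jm).
have vim_le l : vv i m l <= vb l.
  case: (eqVneq l j) => [->|h]; last by rewrite vim.
  rewrite vimj /vb eqxx orbT /=; exact: ell_le.
have vv_ge0 b1 b2 l : 0 <= vv b1 b2 l by exact: val_ge0.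
have ell0 t : 0 <= ell (w t) by exact: le_trans e_ge0 (ell_ge (hw t)).
have L1 : ell (w m) <= Rm i j \/ vb ls <= Rm i j.
  have [l hl] := Rm_ex i j; rewrite hl.
  case: (eqVneq l m) => [->|lm]; first by left; rewrite vijm.
  by right; rewrite vij.
have L2 : ell (w m) * vb ls <= Qm i j \/ vb ps.1 * vb ps.2 <= Qm i j.
  have [c [d [cd ->]]] := Qm_ex ij.
  case: (eqVneq c m) => [cm|cm].
    left; rewrite cm vijm vij; last by rewrite -cm eq_sym.
    by apply: ler_wpM2l; [exact: ell0|exact: r1le].
  case: (eqVneq d m) => [dm|dm].
    left; rewrite dm vijm vij // [vb c * _]mulrC.
    by apply: ler_wpM2l; [exact: ell0|exact: r1le].
  by right; rewrite !vij //; exact: Q0le.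
have U1a : Rm i m <= ell (w j) by rewrite -vimj; exact: Rm_le.
have U1b : Rm i m <= vb ls by exact: le_trans (Rm_le i m ls) (vim_le ls).
have U2b : Qm i m <= vb ps.1 * vb ps.2.
  apply: le_trans (Qm_le im q12) _.
  by apply: ler_pM; rewrite ?vv_ge0 ?vim_le.
have U2a : Qm i m <= ell (w j) * vb ls.
  case: (eqVneq ls j) => [lj|lj].
    have ji : j != i by rewrite eq_sym.
    apply: le_trans (Qm_le im ji) _.
    rewrite vimj lj.
    have -> : vb j = f by rewrite /vb eqxx orbT.
    apply: ler_wpM2l; first exact: ell0.
    by apply: le_trans (vim_le i) _.
  apply: le_trans (Qm_le im (_ : j != ls)) _; first by rewrite eq_sym.
  by rewrite vimj vim.
rewrite !LL_F.
have key Rl Ru Ql Qu : Rm i m <= Ru -> Qm i m <= Qu -> Rl <= Rm i j -> Ql <= Qm i j ->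
    0 <= GR (w i) (w j) (w m) Rl Ru -> 0 <= GQ (w i) (w j) (w m) Ql Qu ->
    FF (w i) (w m) (Rm i m) (Qm i m) <= FF (w i) (w j) (Rm i j) (Qm i j).
  move=> h1 h2 h3 h4 h5 h6.
  apply: le_trans (F_mono (hw i) (hw m) h1 h2) _.
  apply: le_trans (Fcore h5 h6) _.
  exact: F_mono (hw i) (hw j) h3 h4.
have r1e : e <= vb ls by exact: vb_ge.
have r11 : vb ls <= 1 by exact: le_trans (vb_le ls) f_le1.
have r10 : 0 <= vb ls by exact: vb_ge0.
have Q00 : 0 <= vb ps.1 * vb ps.2 by rewrite mulr_ge0.
have a1 := w_le1 i.
have GR1 : 0 <= GR (w i) (w j) (w m) (ell (w m)) (ell (w j)).
  by apply: GR_case1; rewrite ?w_ge0 ?w_le1.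
have GR2 : 0 <= GR (w i) (w j) (w m) (vb ls) (vb ls) by exact: GR_case2.
have GQ1 : 0 <= GQ (w i) (w j) (w m) (ell (w m) * vb ls) (ell (w j) * vb ls) by exact: GQ_case1.
have GQ2 : 0 <= GQ (w i) (w j) (w m) (vb ps.1 * vb ps.2) (vb ps.1 * vb ps.2) by exact: GQ_case2.
case: L1 => h1; case: L2 => h2.
- exact: key U1a U2a h1 h2 GR1 GQ1.
- exact: key U1a U2b h1 h2 GR1 GQ2.
- exact: key U1b U2a h1 h2 GR2 GQ1.
- exact: key U1b U2b h1 h2 GR2 GQ2.
Qed.

Lemma vv_sym b1 b2 l : vv b1 b2 l = vv b2 b1 l.
Proof. rewrite /vv /vl; case: (l == b1); case: (l == b2) => //. Qed.

Lemma Rm_sym b1 b2 : Rm b1 b2 = Rm b2 b1.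
Proof.
apply: le_anti; apply/andP; split.
  by have [l ->] := Rm_ex b2 b1; rewrite (vv_sym b2 b1 l); exact: Rm_le.
by have [l ->] := Rm_ex b1 b2; rewrite (vv_sym b1 b2 l); exact: Rm_le.
Qed.

Lemma Qm_sym b1 b2 : b1 != b2 -> Qm b1 b2 = Qm b2 b1.
Proof.
move=> b12; have b21 : b2 != b1 by rewrite eq_sym.
apply: le_anti; apply/andP; split.
  have [c [d [cd ->]]] := Qm_ex b21; rewrite (vv_sym b2 b1 c) (vv_sym b2 b1 d); exact: Qm_le.
have [c [d [cd ->]]] := Qm_ex b12; rewrite (vv_sym b1 b2 c) (vv_sym b1 b2 d); exact: Qm_le.
Qed.

Lemma LL_sym b1 b2 : b1 != b2 -> LL b1 b2 = LL b2 b1.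
Proof. move=> b12; rewrite !LL_F Rm_sym Qm_sym // /FF; rring. Qed.

Lemma main (A1 B1 : {set 'I_N}) (pi2 sigma2 : {ffun 'I_N -> bool} -> {set 'I_N}) :
  admissible_policy 2 A1 pi2 -> myopic_policy 2 p01 p11 w A1 pi2 ->
  admissible_policy 2 B1 sigma2 ->
  total_reward p01 p11 w B1 sigma2 <= total_reward p01 p11 w A1 pi2.
Proof.
case=> cA [cpi agA] [[_ hA1] hpi] [cB [csig agB]].
have Tid b1 b2 : (1 - (1 - w b1) * (1 - w b2)) + (1 - Lopt2 b1 b2) = 1 + 1 - LL b1 b2.
  by rewrite /LL; rring.
have hB b1 b2 : b1 != b2 -> B1 = [set b1; b2] -> total_reward p01 p11 w B1 sigma2 <= 1 + 1 - LL b1 b2.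
  move=> b12 eB; subst B1; rewrite total_eq // -Tid lerD2l.
  by apply: lerB; [exact: lexx | exact: slot2_lower].
have hA a1 a2 : a1 != a2 -> A1 = [set a1; a2] -> 1 + 1 - LL a1 a2 <= total_reward p01 p11 w A1 pi2.
  move=> a12 eA; subst A1; rewrite total_eq // -Tid lerD2l.
  by apply: lerB; [exact: lexx | exact: slot2_upper].
suff [a1 [a2 [b1 [b2 [a12 [b12 [eA [eB hLL]]]]]]]] : exists a1 a2 b1 b2, a1 != a2 /\ b1 != b2 /\
    A1 = [set a1; a2] /\ B1 = [set b1; b2] /\ LL a1 a2 <= LL b1 b2.
  apply: le_trans (hB _ _ b12 eB) _; apply: le_trans (hA _ _ a12 eA).
  by apply: lerB; [exact: lexx | exact: hLL].
have [a1 [a2 [a12 eA]]] := card2E cA.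
have [b1 [b2 [b12 eB]]] := card2E cB.
have one c1 c2 : c1 != c2 -> c1 \in A1 -> c2 \notin A1 ->
    exists a, A1 = [set c1; a] /\ c1 != a /\ LL c1 a <= LL c1 c2.
  move=> c12 c1A c2A.
  have hex a : a \in A1 -> A1 = [set c1; a] -> c1 != a -> exists a, A1 = [set c1; a] /\ c1 != a /\ LL c1 a <= LL c1 c2.
    move=> aA eA' c1a; exists a; split => //; split => //.
    apply: exchange => //.
      by apply/eqP => ca; rewrite ca aA in c2A.
    exact: hA1.
  have : c1 \in [set a1; a2] by rewrite -eA.
  rewrite !inE => /orP[/eqP e1|/eqP e1].
    apply: (hex a2); [by rewrite eA !inE eqxx orbT | by rewrite e1 | by rewrite e1].
  apply: (hex a1); [by rewrite eA !inE eqxx | by rewrite e1 setUC | by rewrite e1 eq_sym].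
case: (boolP (b1 \in A1)) => b1A; case: (boolP (b2 \in A1)) => b2A.
- exists b1, b2, b1, b2; split; [done|split; [done|split; [|split; [done|exact: lexx]]]].
  apply/eqP; rewrite eq_sym eqEcard; apply/andP; split.
    by apply/subsetP => x; rewrite !inE => /orP[/eqP->|/eqP->].
  by rewrite cA cards2 b12.
- have [a [eA' [b1a hl]]] := one b1 b2 b12 b1A b2A.
  by exists b1, a, b1, b2.
- have b21 : b2 != b1 by rewrite eq_sym.
  have [a [eA' [b2a hl]]] := one b2 b1 b21 b2A b1A.
  exists b2, a, b2, b1; split; [done|split; [done|split; [done|split; [|done]]]].
  by rewrite eB setUC.
- have a1A : a1 \in A1 by rewrite eA !inE eqxx.
  have a2A : a2 \in A1 by rewrite eA !inE eqxx orbT.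
  have ne x y : x \in A1 -> y \notin A1 -> y != x.
    by move=> xA yA; apply/eqP => yx; rewrite yx xA in yA.
  exists a1, a2, b1, b2; split; [done|split; [done|split; [done|split; [done|]]]].
  apply: (@le_trans _ _ (LL a1 b1)).
    by apply: exchange; try done; by [rewrite ne | rewrite eq_sym ne | apply: hA1].
  rewrite LL_sym; last by rewrite eq_sym ne.
  by apply: exchange; try done; by [rewrite ne | rewrite eq_sym ne | apply: hA1].
Qed.

End Opt.

Theorem theorem1 (R : realFieldType) (N : nat) (p01 p11 : R) (w : 'I_N -> R)
    (A1 : {set 'I_N}) (pi2 : {ffun 'I_N -> bool} -> {set 'I_N}) :
  (2 <= N)%N ->
  0 <= p01 <= 1 -> 0 <= p11 <= 1 -> p01 <= p11 ->
  (forall i, 0 <= w i <= 1) ->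
  admissible_policy 2 A1 pi2 ->
  myopic_policy 2 p01 p11 w A1 pi2 ->
  forall (B1 : {set 'I_N}) (sigma2 : {ffun 'I_N -> bool} -> {set 'I_N}),
    admissible_policy 2 B1 sigma2 ->
    total_reward p01 p11 w B1 sigma2 <= total_reward p01 p11 w A1 pi2.
Proof.
move=> _ /andP[h0 _] /andP[_ h1] h01 hw hA hM B1 sigma2 hB.
exact: (main h0 h01 h1 hw hA hM hB).
Qed.
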